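(* Fix an integer $\theta\ge1$ and let $(U^\theta_n)_{n\ge0}$ be defined by $U^\theta_0=\dots=U^\theta_{\theta+1}=0$, $U^\theta_{\theta+2}=U^\theta_{\theta+3}=1$ and $$U^\theta_n=1+\frac{1}{n-\theta-1}\sum_{k=\theta}^{n-2}\left(U^\theta_k+U^\theta_{n-k-2}\right),\qquad n\ge\theta+2.$$ Then, as $n\to\infty$, $U^\theta_n\sim K_\theta\, n$ with $$K_\theta=e^{-1-H_{\theta+1}}\int_0^1 e^{t+\left(t+\frac{t^2}{2}+\dots+\frac{t^{\theta+1}}{\theta+1}\right)}\,dt,$$ where $H_{\theta+1}=1+\frac12+\dots+\frac{1}{\theta+1}$. In particular $K_1\approx 0.340633$, $K_2\approx0.285497$, $K_3\approx0.247908$.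
   Context: $U^\theta_n$ is the expected number of base pairs of a quasi-random saturated structure on $n$ positions, generated as follows: if the current interval has fewer than $\theta+2$ positions, stop; otherwise pair its first position with a position $u$ chosen uniformly among positions $\theta+2,\dots,m$ of the interval (where $m$ is its length), and recurse independently on the interval strictly between the two paired positions and on the interval strictly after $u$. *)

(* Defs.v *)
From Stdlib Require Export Reals.
Open Scope R_scope.

Definition harmonic (m : nat) : R :=
  sum_f_R0 (fun i => / INR (S i)) (pred m).

Definition trunc_log_series (m : nat) (t : R) : R :=
  sum_f_R0 (fun i => t ^ (S i) / INR (S i)) (pred m).

Definition K_integrand (theta : nat) (t : R) : R :=
  exp (t + trunc_log_series (S theta) t).

Definition is_U_seq (theta : nat) (U : nat -> R) : Prop :=
  (forall n, (n <= S theta)%nat -> U n = 0) /\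
  U (theta + 2)%nat = 1 /\ U (theta + 3)%nat = 1 /\
  (forall n, (theta + 2 <= n)%nat ->
     U n = 1 + / INR (n - theta - 1) *
             sum_f theta (n - 2) (fun k => U k + U (n - k - 2)%nat)).

(* Main.v *)
Require Import Defs.
From Stdlib Require Import Reals Lra Lia Psatz Arith.
Open Scope R_scope.

Lemma dsum (g dg : nat -> R -> R) n x :
  (forall i, derivable_pt_lim (g i) x (dg i x)) ->
  derivable_pt_lim (fun y => sum_f_R0 (fun i => g i y) n) x (sum_f_R0 (fun i => dg i x) n).
Proof.
  intros H; induction n as [|n IH]; simpl.
  - apply H.
  - apply (derivable_pt_lim_plus (fun y => sum_f_R0 (fun i => g i y) n) (g (S n))); auto.
Qed.

Lemma dmono (c : R) j x : derivable_pt_lim (fun y => c * y ^ j) x (c * (INR j * x ^ pred j)).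
Proof.
  apply (derivable_pt_lim_scal (fun y => y ^ j)). apply derivable_pt_lim_pow.
Qed.

Lemma dLm m x : derivable_pt_lim (trunc_log_series m) x (sum_f_R0 (fun i => x ^ i) (pred m)).
Proof.
  unfold trunc_log_series.
  apply (dsum (fun i y => y ^ S i / INR (S i)) (fun i y => y ^ i)).
  intros i.
  assert (H := derivable_pt_lim_scal_right (fun y => y ^ S i) x _ (/ INR (S i)) (derivable_pt_lim_pow x (S i))).
  replace (x ^ i) with (INR (S i) * x ^ pred (S i) * / INR (S i)).
  - exact H.
  - simpl pred. field. apply not_0_INR. lia.
Qed.

Definition Pp (m : nat) (x : R) : R := 1 + sum_f_R0 (fun i => x ^ i) (pred m).
Definition EE (m : nat) (x : R) : R := exp (x + trunc_log_series m x).

Lemma dEE m x : derivable_pt_lim (EE m) x (EE m x * Pp m x).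
Proof.
  unfold EE, Pp.
  apply (derivable_pt_lim_comp (fun y => y + trunc_log_series m y) exp).
  - apply (derivable_pt_lim_plus id (trunc_log_series m)).
    + apply derivable_pt_lim_id.
    + apply dLm.
  - apply derivable_pt_lim_exp.
Qed.

Lemma cont_of_lim f (l : R -> R) : (forall x, derivable_pt_lim f x (l x)) -> forall x, continuity_pt f x.
Proof.
  intros H x. apply derivable_continuous_pt. exists (l x). apply H.
Qed.

Lemma dlim_ext f g x l : (forall y, f y = g y) -> derivable_pt_lim f x l -> derivable_pt_lim g x l.
Proof.
  intros H D eps Heps. destruct (D eps Heps) as [d Hd]. exists d.
  intros h H1 H2. rewrite <- !H. apply Hd; auto.
Qed.

Section S.
Variable m : nat.
Variable q : nat -> R.

Definition QQ N x := sum_f_R0 (fun j => q j * x ^ j) N.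
Definition dQ N x := sum_f_R0 (fun j => q j * (INR j * x ^ pred j)) N.
Definition hh N x := EE m x * (Pp m x * QQ N x + dQ N x).
Definition DD N x := Pp m x * QQ N x + dQ N x - 1.
Definition WW N x := sum_f_R0 (fun i => sum_f_R0 (fun l => q (N - l) * x ^ (N - l + i)) i) (pred m).
Definition delta (N : nat) : R := if Nat.eqb N 0 then 1 else 0.

Lemma dQQ N x : derivable_pt_lim (QQ N) x (dQ N x).
Proof.
  unfold QQ, dQ. apply (dsum (fun j y => q j * y ^ j) (fun j y => q j * (INR j * y ^ pred j))).
  intros; apply dmono.
Qed.

Lemma dEQ N x : derivable_pt_lim (fun y => EE m y * QQ N y) x (hh N x).
Proof.
  unfold hh.
  replace (EE m x * (Pp m x * QQ N x + dQ N x)) with (EE m x * Pp m x * QQ N x + EE m x * dQ N x) by ring.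
  apply (derivable_pt_lim_mult (EE m) (QQ N)); [apply dEE | apply dQQ].
Qed.

Lemma cont_hh N x : continuity_pt (hh N) x.
Proof.
  unfold hh.
  apply (continuity_pt_mult (EE m) (fun y => Pp m y * QQ N y + dQ N y)).
  - exact (cont_of_lim _ _ (dEE m) x).
  - apply (continuity_pt_plus (fun y => Pp m y * QQ N y) (dQ N)).
    + apply (continuity_pt_mult (Pp m) (QQ N)).
      * unfold Pp. apply (continuity_pt_plus (fct_cte 1) (fun y => sum_f_R0 (fun i => y ^ i) (pred m))).
        -- apply continuity_pt_const. unfold constant; auto.
        -- apply (cont_of_lim _ (fun x => sum_f_R0 (fun i => INR i * x ^ pred i) (pred m))).
           intro y. apply (dsum (fun i y => y ^ i) (fun i y => INR i * y ^ pred i)).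
           intros; apply derivable_pt_lim_pow.
      * exact (cont_of_lim _ _ (dQQ N) x).
    + apply (cont_of_lim _ (fun x => sum_f_R0 (fun j => q j * (INR j * (INR (pred j) * x ^ pred (pred j)))) N)).
      intro y. unfold dQ.
      apply (dsum (fun j y => q j * (INR j * y ^ pred j)) (fun j y => q j * (INR j * (INR (pred j) * y ^ pred (pred j))))).
      intros j.
      replace (q j * (INR j * (INR (pred j) * y ^ pred (pred j)))) with ((q j * INR j) * (INR (pred j) * y ^ pred (pred j))) by ring.
      assert (H := dmono (q j * INR j) (pred j) y).
      eapply dlim_ext; [|exact H]. intros; simpl; ring.
Qed.
End S.

Section S.
Variable m : nat.
Variable q : nat -> R.
Hypothesis Hq0 : q 0%nat = 0.
Hypothesis Hq : forall j, INR (S j) * q (S j) = delta j - q j - sum_f_R0 (fun i => q (j - i)%nat) (pred m).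

Lemma qpow k i x : q (k - i)%nat * x ^ (k - i + i) = q (k - i)%nat * x ^ k.
Proof.
  destruct (le_lt_dec i k) as [H|H].
  - rewrite Nat.sub_add; auto.
  - replace (k - i)%nat with 0%nat by lia. rewrite Hq0; ring.
Qed.

Lemma inner_step N i x :
  sum_f_R0 (fun l => q (S N - l)%nat * x ^ (S N - l + i)) i =
  q (S N) * x ^ (S N + i) + sum_f_R0 (fun l => q (N - l)%nat * x ^ (N - l + i)) i - q (N - i)%nat * x ^ N.
Proof.
  destruct i as [|i].
  - simpl. rewrite !Nat.sub_0_r, !Nat.add_0_r. ring.
  - rewrite decomp_sum by lia. simpl pred.
    change (sum_f_R0 (fun l => q (N - l)%nat * x ^ (N - l + S i)) (S i)) with
      (sum_f_R0 (fun l => q (N - l)%nat * x ^ (N - l + S i)) i + q (N - S i)%nat * x ^ (N - S i + S i)).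
    rewrite qpow. rewrite Nat.sub_0_r.
    assert (E : sum_f_R0 (fun l => q (S N - S l)%nat * x ^ (S N - S l + S i)) i =
                sum_f_R0 (fun l => q (N - l)%nat * x ^ (N - l + S i)) i)
      by (apply sum_eq; intros; reflexivity).
    rewrite E. ring.
Qed.

Lemma scal_l (c : R) (g : nat -> R) n : sum_f_R0 (fun i => c * g i) n = c * sum_f_R0 g n.
Proof. induction n; simpl; [ring| rewrite IHn; ring]. Qed.

Lemma WW_step N x :
  WW m q (S N) x = WW m q N x + q (S N) * x ^ (S N) * sum_f_R0 (fun i => x ^ i) (pred m)
                   - x ^ N * sum_f_R0 (fun i => q (N - i)%nat) (pred m).
Proof.
  unfold WW.
  rewrite (sum_eq _ (fun i => sum_f_R0 (fun l => q (N - l)%nat * x ^ (N - l + i)) i +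
                          ((q (S N) * x ^ (S N)) * x ^ i - x ^ N * q (N - i)%nat)))
    by (intros; rewrite inner_step, pow_add; ring).
  rewrite plus_sum, minus_sum, !scal_l.
  change (sum_f_R0 (pow x)) with (sum_f_R0 (fun i => x ^ i)). ring.
Qed.

Lemma delta_pow N x : delta N * x ^ N = delta N.
Proof. unfold delta; destruct N; simpl; ring. Qed.

Lemma DD_closed N x : DD m q N x = q N * x ^ N + WW m q N x - delta N.
Proof.
  induction N as [|N IH].
  - unfold DD, QQ, dQ, WW, delta. simpl. rewrite Hq0.
    rewrite (sum_eq _ (fun _ => 0)).
    + rewrite sum_cte. ring.
    + intros i _. apply sum_eq_R0. intros. simpl. ring.
  - unfold DD in *. unfold QQ, dQ in *. cbn [sum_f_R0 Nat.pred].
    rewrite WW_step.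
    assert (H1 := Hq N). assert (H2 := delta_pow N x).
    assert (H3 : delta (S N) = 0) by reflexivity.
    unfold Pp in *. rewrite H3.
    set (A := sum_f_R0 (fun i => x ^ i) (pred m)) in *.
    set (B := sum_f_R0 (fun i => q (N - i)%nat) (pred m)) in *.
    set (Q0 := sum_f_R0 (fun j => q j * x ^ j) N) in *.
    set (d0 := sum_f_R0 (fun j => q j * (INR j * x ^ pred j)) N) in *.
    transitivity ((1 + A) * Q0 + d0 - 1 + (1 + A) * (q (S N) * x ^ S N) + x ^ N * (INR (S N) * q (S N))).
    + ring.
    + rewrite IH, H1. transitivity (q N * x ^ N + WW m q N x - delta N + (1 + A) * (q (S N) * x ^ S N) + delta N * x ^ N - x ^ N * (q N + B)); [ring|]. rewrite H2; ring.
Qed.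
End S.

Lemma pow_01 x k : 0 <= x <= 1 -> 0 <= x ^ k <= 1.
Proof.
  intros H. split. apply pow_le; lra.
  rewrite <- (pow1 k). apply pow_incr; lra.
Qed.

Lemma abs_qx (c x : R) k : 0 <= x <= 1 -> Rabs (c * x ^ k) <= Rabs c.
Proof.
  intros H. rewrite Rabs_mult. destruct (pow_01 x k H).
  rewrite (Rabs_right (x ^ k)) by lra.
  rewrite <- (Rmult_1_r (Rabs c)) at 2. apply Rmult_le_compat_l; [apply Rabs_pos| lra].
Qed.

Definition eps (m : nat) (q : nat -> R) (N : nat) : R :=
  Rabs (q N) + sum_f_R0 (fun i => sum_f_R0 (fun l => Rabs (q (N - l)%nat)) i) (pred m).

Lemma abs_sum_le (g : nat -> R) (G : nat -> R) n :
  (forall i, (i <= n)%nat -> Rabs (g i) <= G i) -> Rabs (sum_f_R0 g n) <= sum_f_R0 G n.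
Proof.
  intros H. eapply Rle_trans. apply sum_f_R0_triangle. apply sum_Rle. auto.
Qed.

Lemma DD_bound m q (Hq0 : q 0%nat = 0)
  (Hq : forall j, INR (S j) * q (S j) = delta j - q j - sum_f_R0 (fun i => q (j - i)%nat) (pred m))
  N x : (1 <= N)%nat -> 0 <= x <= 1 -> Rabs (DD m q N x) <= eps m q N.
Proof.
  intros HN Hx. rewrite (DD_closed m q Hq0 Hq).
  replace (delta N) with 0 by (unfold delta; destruct N; [lia|reflexivity]).
  unfold eps, WW. rewrite Rminus_0_r.
  eapply Rle_trans. apply Rabs_triang. apply Rplus_le_compat.
  - apply abs_qx; auto.
  - apply abs_sum_le. intros i _. apply abs_sum_le. intros l _. apply abs_qx; auto.
Qed.

Lemma cv_shift0 (u : nat -> R) l : Un_cv u 0 -> Un_cv (fun N => Rabs (u (N - l)%nat)) 0.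
Proof.
  intros H e He. destruct (H e He) as [N0 HN0]. exists (N0 + l)%nat.
  intros n Hn. unfold Rdist in *. rewrite Rminus_0_r, Rabs_Rabsolu.
  specialize (HN0 (n - l)%nat ltac:(lia)). rewrite Rminus_0_r in HN0. exact HN0.
Qed.

Lemma cv_sum0 (g : nat -> nat -> R) k :
  (forall i, Un_cv (g i) 0) -> Un_cv (fun N => sum_f_R0 (fun i => g i N) k) 0.
Proof.
  intros H. induction k as [|k IH]; simpl.
  - apply H.
  - replace 0 with (0 + 0) by ring. apply CV_plus; auto.
Qed.

Lemma eps_cv m q : Un_cv q 0 -> Un_cv (eps m q) 0.
Proof.
  intros H. unfold eps. replace 0 with (0 + 0) by ring. apply CV_plus.
  - assert (H' := cv_shift0 q 0 H). intros e He. destruct (H' e He) as [N HN]. exists N.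
    intros n Hn. specialize (HN n Hn). rewrite Nat.sub_0_r in HN. exact HN.
  - apply (cv_sum0 (fun i N => sum_f_R0 (fun l => Rabs (q (N - l)%nat)) i)).
    intros i. apply (cv_sum0 (fun l N => Rabs (q (N - l)%nat))). intros l. apply cv_shift0; auto.
Qed.

Lemma single_le_sum (g : nat -> R) n k : (forall i, 0 <= g i) -> (k <= n)%nat -> g k <= sum_f_R0 g n.
Proof.
  intros Hp. induction n as [|n IH]; intros Hk.
  - replace k with 0%nat by lia. simpl; lra.
  - simpl. destruct (Nat.eq_dec k (S n)) as [->|Hne].
    + assert (0 <= sum_f_R0 g n) by (apply cond_pos_sum; auto). lra.
    + specialize (IH ltac:(lia)). specialize (Hp (S n)). lra.
Qed.

Section Dec.
Variable m : nat.
Hypothesis Hm : (1 <= m)%nat.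
Variable q : nat -> R.
Hypothesis Hq0 : q 0%nat = 0.
Hypothesis Hq : forall j, INR (S j) * q (S j) = delta j - q j - sum_f_R0 (fun i => q (j - i)%nat) (pred m).

Definition Cq := sum_f_R0 (fun j => Rabs (q j)) (S m).

Lemma Cq_pos : 0 <= Cq.
Proof. apply cond_pos_sum. intros; apply Rabs_pos. Qed.

Lemma q_rec_bound j C : (1 <= j)%nat -> (forall k, (k <= j)%nat -> Rabs (q k) <= C) ->
  Rabs (q (S j)) <= INR (S m) * C / INR (S j).
Proof.
  intros Hj HC.
  assert (HS : 0 < INR (S j)) by (apply lt_0_INR; lia).
  assert (E : q (S j) = (delta j - q j - sum_f_R0 (fun i => q (j - i)%nat) (pred m)) / INR (S j)).
  { rewrite <- Hq. field. lra. }
  rewrite E. unfold Rdiv. rewrite Rabs_mult, Rabs_inv, (Rabs_right (INR (S j))) by lra.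
  apply Rmult_le_compat_r. left; apply Rinv_0_lt_compat; auto.
  replace (delta j) with 0 by (unfold delta; destruct j; [lia|reflexivity]).
  assert (H1 : Rabs (sum_f_R0 (fun i => q (j - i)%nat) (pred m)) <= INR m * C).
  { eapply Rle_trans. apply abs_sum_le with (G := fun _ => C). intros; apply HC; lia.
    rewrite sum_cte. replace (S (pred m)) with m by lia. lra. }
  assert (H2 := HC j (le_n j)).
  rewrite S_INR.
  unfold Rminus. eapply Rle_trans. apply Rabs_triang. rewrite Rabs_Ropp.
  eapply Rle_trans. apply Rplus_le_compat_r. apply Rabs_triang. rewrite Rabs_R0, Rabs_Ropp. lra.
Qed.

Lemma q_bounded : forall n, Rabs (q n) <= Cq.
Proof.
  assert (forall n k, (k <= n)%nat -> Rabs (q k) <= Cq).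
  { induction n as [|n IH]; intros k Hk.
    - unfold Cq. apply (single_le_sum (fun j => Rabs (q j))). intros; apply Rabs_pos. lia.
    - destruct (Nat.eq_dec k (S n)) as [->|Hne]; [|apply IH; lia].
      destruct (le_lt_dec (S n) (S m)) as [Hs|Hs].
      + unfold Cq. apply (single_le_sum (fun j => Rabs (q j))). intros; apply Rabs_pos. lia.
      + eapply Rle_trans. apply q_rec_bound; [lia|exact IH].
        assert (0 <= Cq) by apply Cq_pos.
        assert (INR (S m) <= INR (S n)) by (apply le_INR; lia).
        assert (0 < INR (S n)) by (apply lt_0_INR; lia).
        apply (Rmult_le_reg_r (INR (S n))); auto. unfold Rdiv. rewrite Rmult_assoc, Rinv_l by lra.
        nra. }
  intros n; apply (H n n); lia.
Qed.

Lemma q_cv0 : Un_cv q 0.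
Proof.
  intros e He.
  set (A := INR (S m) * Cq + 1).
  assert (HA : 0 < A) by (unfold A; assert (0 <= INR (S m) * Cq) by (apply Rmult_le_pos; [apply pos_INR|apply Cq_pos]); lra).
  destruct (archimed_cor1 (e / A)) as [N [HN HN0]]. apply Rdiv_lt_0_compat; auto.
  exists (S (S N)). intros n Hn. unfold Rdist. rewrite Rminus_0_r.
  destruct n as [|j]; [lia|].
  eapply Rle_lt_trans. apply q_rec_bound; [lia|intros; apply q_bounded].
  assert (0 < INR N) by (apply lt_0_INR; lia).
  assert (INR N <= INR (S j)) by (apply le_INR; lia).
  assert (0 <= INR (S m) * Cq) by (apply Rmult_le_pos; [apply pos_INR|apply Cq_pos]).
  apply Rle_lt_trans with (A / INR N).
  - unfold Rdiv. apply Rmult_le_compat; try lra.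
    + left; apply Rinv_0_lt_compat; apply lt_0_INR; lia.
    + unfold A; lra.
    + apply Rinv_le_contravar; lra.
  - apply (Rmult_lt_reg_r (/ A)). apply Rinv_0_lt_compat; auto.
    replace (A / INR N * / A) with (/ INR N) by (field; lra). exact HN.
Qed.
End Dec.

Lemma ftc (G g : R -> R) a b (pr : Riemann_integrable g a b) : a <= b ->
  (forall x, a <= x <= b -> continuity_pt g x) ->
  (forall x, a <= x <= b -> derivable_pt_lim G x (g x)) -> RiemannInt pr = G b - G a.
Proof.
  intros H H0 Hd.
  rewrite (RiemannInt_P20 H (FTC_P1 H H0) pr).
  assert (H1 := RiemannInt_P29 H H0).
  assert (H2 : antiderivative g G a b).
  { split; auto. intros x Hx. exists (exist _ (g x) (Hd x Hx)). reflexivity. }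
  destruct (antiderivative_Ucte g _ _ _ _ H1 H2) as [C HC].
  rewrite (HC b), (HC a) by lra. ring.
Qed.

Lemma EE_le m x : 0 <= x <= 1 -> EE m x <= EE m 1.
Proof.
  intros Hx. unfold EE.
  assert (trunc_log_series m x <= trunc_log_series m 1).
  { unfold trunc_log_series. apply sum_Rle. intros i _. unfold Rdiv.
    apply Rmult_le_compat_r. left; apply Rinv_0_lt_compat, lt_0_INR; lia.
    apply pow_incr; lra. }
  destruct (Rle_lt_or_eq_dec (x + trunc_log_series m x) (1 + trunc_log_series m 1)) as [h|h]; [lra| |].
  - left; apply exp_increasing; auto.
  - rewrite h; lra.
Qed.

Lemma QQ0 q N : q 0%nat = 0 -> QQ q N 0 = 0.
Proof.
  intros H. unfold QQ. apply sum_eq_R0. intros [|n] _; simpl; [rewrite H|]; ring.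
Qed.

Lemma QQ1 q N : QQ q N 1 = sum_f_R0 q N.
Proof. unfold QQ. apply sum_eq. intros; rewrite pow1; ring. Qed.

Section Id.
Variable m : nat.
Hypothesis Hm : (1 <= m)%nat.
Variable q : nat -> R.
Hypothesis Hq0 : q 0%nat = 0.
Hypothesis Hq : forall j, INR (S j) * q (S j) = delta j - q j - sum_f_R0 (fun i => q (j - i)%nat) (pred m).
Variable pr : Riemann_integrable (EE m) 0 1.

Lemma key_bound N : (1 <= N)%nat ->
  Rabs (EE m 1 * sum_f_R0 q N - RiemannInt pr) <= EE m 1 * eps m q N.
Proof.
  intros HN.
  assert (prh : Riemann_integrable (hh m q N) 0 1).
  { apply continuity_implies_RiemannInt. lra. intros; apply cont_hh. }
  assert (Hint : RiemannInt prh = EE m 1 * sum_f_R0 q N).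
  { rewrite (ftc (fun y => EE m y * QQ q N y) (hh m q N) 0 1 prh); [|lra| intros; apply cont_hh | intros; apply dEQ].
    rewrite QQ0, QQ1 by auto. ring. }
  set (c := EE m 1 * eps m q N).
  assert (Hpt : forall x, 0 < x < 1 -> EE m x + (- c) * fct_cte 1 x <= hh m q N x <= EE m x + c * fct_cte 1 x).
  { intros x Hx. unfold fct_cte.
    assert (Hh : hh m q N x = EE m x + EE m x * DD m q N x) by (unfold hh, DD; ring).
    assert (HD := DD_bound m q Hq0 Hq N x HN ltac:(lra)).
    assert (HE := EE_le m x ltac:(lra)).
    assert (HE0 : 0 < EE m x) by (unfold EE; apply exp_pos).
    assert (He : 0 <= eps m q N) by (eapply Rle_trans; [apply Rabs_pos|exact HD]).
    assert (Rabs (EE m x * DD m q N x) <= c).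
    { rewrite Rabs_mult, (Rabs_right (EE m x)) by lra. unfold c.
      apply Rmult_le_compat; auto; try lra. apply Rabs_pos. }
    rewrite Hh. pose proof (Rle_abs (EE m x * DD m q N x)). pose proof (Rle_abs (- (EE m x * DD m q N x))). rewrite Rabs_Ropp in *. lra. }
  assert (pru := RiemannInt_P10 c pr (RiemannInt_P14 0 1 1)).
  assert (prl := RiemannInt_P10 (- c) pr (RiemannInt_P14 0 1 1)).
  assert (I1 := RiemannInt_P19 prh pru ltac:(lra) (fun x Hx => proj2 (Hpt x Hx))).
  assert (I2 := RiemannInt_P19 prl prh ltac:(lra) (fun x Hx => proj1 (Hpt x Hx))).
  rewrite (RiemannInt_P13 pr (RiemannInt_P14 0 1 1) pru) in I1.
  rewrite (RiemannInt_P13 pr (RiemannInt_P14 0 1 1) prl) in I2.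
  rewrite RiemannInt_P15 in I1, I2.
  rewrite Hint in I1, I2. apply Rabs_le. lra.
Qed.

Lemma ident : Un_cv (fun N => sum_f_R0 q N) (RiemannInt pr / EE m 1).
Proof.
  intros e He.
  assert (HE1 : 0 < EE m 1) by (unfold EE; apply exp_pos).
  destruct (eps_cv m q (q_cv0 m Hm q Hq) (e / 2) ltac:(lra)) as [N0 HN0].
  exists (S N0). intros n Hn.
  specialize (HN0 n ltac:(lia)). unfold Rdist in *. rewrite Rminus_0_r in HN0.
  assert (Hk := key_bound n ltac:(lia)).
  assert (He0 : 0 <= eps m q n).
  { eapply Rle_trans; [apply Rabs_pos|]. apply (DD_bound m q Hq0 Hq n 0); [lia|lra]. }
  rewrite Rabs_right in HN0 by lra.
  replace (sum_f_R0 q n - RiemannInt pr / EE m 1) with ((EE m 1 * sum_f_R0 q n - RiemannInt pr) / EE m 1) by (field; lra).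
  unfold Rdiv. rewrite Rabs_mult, (Rabs_right (/ EE m 1)) by (left; apply Rinv_0_lt_compat; auto).
  apply (Rmult_lt_reg_r (EE m 1)); auto. rewrite Rmult_assoc, Rinv_l by lra.
  nra.
Qed.
End Id.

Lemma shiftsum s M (g : nat -> R) : (forall i, (i < s)%nat -> g i = 0) ->
  sum_f_R0 (fun x => g (x + s)%nat) M = sum_f_R0 g (M + s).
Proof.
  intros H. induction M as [|M IH].
  - simpl. destruct s as [|s]; simpl; [reflexivity|].
    rewrite sum_eq_R0; [ring|]. intros; apply H; lia.
  - simpl. rewrite IH. reflexivity.
Qed.

Lemma revsum (g : nat -> R) M : sum_f_R0 (fun x => g (M - x)%nat) M = sum_f_R0 g M.
Proof.
  induction M as [|M IH].
  - reflexivity.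
  - rewrite decomp_sum by lia. simpl pred. rewrite Nat.sub_0_r.
    rewrite (sum_eq _ (fun i => g (M - i)%nat)) by (intros; reflexivity).
    rewrite IH. simpl. ring.
Qed.

Lemma tel (g : nat -> R) k p :
  sum_f_R0 (fun i => g (k - i)%nat - g (pred (k - i))) p = g k - g (k - S p)%nat.
Proof.
  induction p as [|p IH]; simpl.
  - rewrite Nat.sub_0_r. replace (pred k) with (k - 1)%nat by lia. ring.
  - rewrite IH. replace (pred (k - S p)) with (k - S (S p))%nat by lia. ring.
Qed.

Section A.
Variable m : nat.
Hypothesis Hm : (2 <= m)%nat.
Variable a : nat -> R.
Hypothesis Ha0 : forall n, (n <= m)%nat -> a n = 0.
Definition Ss k := sum_f_R0 a k.
Hypothesis HR : forall n, INR (n - m) * a n = INR (n - m) + Ss (n - 2) + Ss (n - m - 1).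

Definition bb n := a n - a (pred n).
Definition ff n := bb n - bb (pred n).

Lemma bb0 n : (n <= m)%nat -> bb n = 0.
Proof. intros; unfold bb; rewrite !Ha0 by lia; ring. Qed.
Lemma ff0 n : (n <= m)%nat -> ff n = 0.
Proof. intros; unfold ff; rewrite !bb0 by lia; ring. Qed.

Lemma Ss_diff k : Ss k - Ss (pred k) = a k.
Proof. destruct k; unfold Ss; simpl; [rewrite Ha0 by lia|]; ring. Qed.

Lemma E1 n : (m <= n)%nat -> (INR (n - m) + 1) * bb (S n) = 1 + a (n - m)%nat - bb n.
Proof.
  intros Hn.
  assert (H1 := HR (S n)). assert (H2 := HR n).
  replace (S n - m)%nat with (S (n - m)) in H1 by lia. rewrite S_INR in H1.
  replace (S n - 2)%nat with (S (n - 2)) in H1 by lia.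
  replace (S (n - m) - 1)%nat with (n - m)%nat in H1 by lia.
  replace (n - m - 1)%nat with (pred (n - m)) in H2 by lia.
  assert (H3 := Ss_diff (S (n - 2))). assert (H4 := Ss_diff (n - m)).
  simpl pred in H3. replace (S (n - 2)) with (pred n) in H3 by lia.
  replace (n - 2)%nat with (pred (pred n)) in H2 by lia. replace (S (n-2)) with (pred n) in H1 by lia.
  unfold bb. simpl pred.
  assert (H5 : Ss (pred n) - Ss (pred (pred n)) = a (pred n)) by apply Ss_diff.
  nra.
Qed.

Definition dd k : R := if Nat.eqb k m then 1 else 0.

Lemma E2 k : INR (S k - m) * ff (S k) = dd k - ff k - (bb k - bb (k - m)).
Proof.
  destruct (le_lt_dec m k) as [Hk|Hk].
  - destruct k as [|n]; [lia|].
    replace (S (S n) - m)%nat with (S (S n - m)) by lia. rewrite S_INR.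
    assert (Hm1 : (m <= S n)%nat) by lia.
    assert (H1 := E1 (S n) Hm1).
    assert (Hbb : a (S n - m)%nat - a (n - m)%nat = bb (S n - m)%nat).
    { unfold bb. replace (pred (S n - m)) with (n - m)%nat by lia. reflexivity. }
    unfold ff. simpl pred.
    destruct (le_lt_dec m n) as [Hn|Hn].
    + assert (H2 := E1 n Hn).
      replace (S n - m)%nat with (S (n - m)) in * by lia. rewrite S_INR.
      replace (dd (S n)) with 0 by (unfold dd; destruct (Nat.eqb_spec (S n) m); [lia|reflexivity]).
      rewrite S_INR in H1.
      replace ((INR (n - m) + 1 + 1) * (bb (S (S n)) - bb (S n))) with
        ((INR (n - m) + 1 + 1) * bb (S (S n)) - (INR (n - m) + 1) * bb (S n) - bb (S n)) by ring.
      rewrite H1, H2. rewrite <- Hbb. ring.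
    + replace (dd (S n)) with 1 by (unfold dd; destruct (Nat.eqb_spec (S n) m); [reflexivity|lia]).
      assert (Hnm : S n = m) by lia.
      replace (S n - m)%nat with 0%nat in * by lia. simpl INR in *.
      rewrite (bb0 n), (bb0 0) by lia. rewrite (Ha0 0) in H1 by lia.
      rewrite (bb0 (S n)) in * by lia. lra.
  - rewrite !ff0 by lia. rewrite !bb0 by lia.
    unfold dd. destruct (Nat.eqb_spec k m); [lia|]. ring.
Qed.

Definition qq j := ff (j + m).

Lemma qq0 : qq 0 = 0.
Proof. unfold qq; apply ff0; lia. Qed.

Lemma qq_rec j : INR (S j) * qq (S j) = delta j - qq j - sum_f_R0 (fun i => qq (j - i)%nat) (pred m).
Proof.
  assert (H := E2 (j + m)).
  replace (S (j + m) - m)%nat with (S j) in H by lia.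
  unfold qq. simpl plus. rewrite H.
  replace (dd (j + m)) with (delta j) by (unfold dd, delta;
     destruct (Nat.eqb_spec (j + m) m), (Nat.eqb_spec j 0); first [reflexivity | lia]).
  replace (bb (j + m) - bb (j + m - m)%nat) with (sum_f_R0 (fun i => ff (j + m - i)%nat) (pred m)).
  - f_equal. apply sum_eq. intros i Hi.
    destruct (le_lt_dec i j).
    + f_equal. lia.
    + rewrite !ff0 by lia. reflexivity.
  - unfold ff. rewrite (tel bb (j + m) (pred m)). f_equal. f_equal. lia.
Qed.

Lemma sum_qq N : sum_f_R0 qq N = bb (N + m).
Proof.
  induction N as [|N IH].
  - simpl. rewrite qq0, bb0 by lia. reflexivity.
  - simpl. rewrite IH. unfold qq, ff. simpl plus. simpl pred. ring.
Qed.

Lemma a_sum n : a n = sum_f_R0 (fun j => bb (S j)) (pred n).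
Proof.
  assert (forall n, a (S n) = sum_f_R0 (fun j => bb (S j)) n).
  { induction n0 as [|n0 IH].
    - simpl. unfold bb. simpl. rewrite (Ha0 0) by lia. ring.
    - simpl. rewrite <- IH. unfold bb. simpl. ring. }
  destruct n as [|n].
  - simpl. unfold bb; simpl. rewrite !Ha0 by lia. ring.
  - apply H.
Qed.

Lemma final_cv K : Un_cv (fun N => sum_f_R0 qq N) K -> Un_cv (fun n => a n / INR n) K.
Proof.
  intros H.
  assert (Hb : Un_cv (fun j => bb (S j)) K).
  { intros e He. destruct (H e He) as [N HN]. exists (N + m)%nat. intros n Hn.
    specialize (HN (S n - m)%nat ltac:(lia)). rewrite sum_qq in HN.
    replace (S n - m + m)%nat with (S n) in HN by lia. exact HN. }
  assert (HC := Cesaro_1 _ _ Hb).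
  intros e He. destruct (HC e He) as [N HN]. exists N. intros n Hn.
  rewrite a_sum. apply HN; auto.
Qed.
End A.

Lemma HR_of theta U : (1 <= theta)%nat -> is_U_seq theta U ->
  forall n, INR (n - S theta) * U n = INR (n - S theta) + Ss U (n - 2) + Ss U (n - S theta - 1).
Proof.
  intros Ht [H0 [_ [_ Hrec]]] n.
  destruct (le_lt_dec n (S theta)) as [Hn|Hn].
  - replace (n - S theta)%nat with 0%nat by lia. simpl INR.
    unfold Ss. rewrite (sum_eq_R0 U (n - 2)) by (intros; apply H0; lia).
    simpl. rewrite (H0 0%nat) by lia. ring.
  - rewrite (Hrec n) by lia.
    replace (n - theta - 1)%nat with (n - S theta)%nat by lia.
    assert (Hi : INR (n - S theta) <> 0) by (apply not_0_INR; lia).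
    field_simplify; [|exact Hi].
    unfold sum_f.
    rewrite (sum_eq _ (fun x => U (x + theta)%nat + U (n - 2 - theta - x)%nat))
      by (intros; simpl; do 2 f_equal; lia).
    rewrite plus_sum. rewrite revsum.
    rewrite shiftsum by (intros; apply H0; lia).
    unfold Ss. replace (n - 2 - theta + theta)%nat with (n - 2)%nat by lia.
    replace (n - 2 - theta)%nat with (n - S theta - 1)%nat by lia. ring.
Qed.

Theorem mainTheorem10 (theta : nat) (U : nat -> R) :
  (1 <= theta)%nat ->
  is_U_seq theta U ->
  exists pr : Riemann_integrable (K_integrand theta) 0 1,
    Un_cv (fun n => U n / INR n)
      (exp (-1 - harmonic (S theta)) * RiemannInt pr).
Proof.
  intros Ht HU.
  assert (pr : Riemann_integrable (EE (S theta)) 0 1).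
  { apply continuity_implies_RiemannInt. lra. intros x _. exact (cont_of_lim _ _ (dEE (S theta)) x). }
  exists pr.
  assert (Hm : (2 <= S theta)%nat) by lia.
  assert (Ha0 : forall n, (n <= S theta)%nat -> U n = 0) by apply HU.
  assert (HR := HR_of theta U Ht HU).
  apply (final_cv (S theta) Hm U Ha0).
  assert (Hid := ident (S theta) ltac:(lia) (qq (S theta) U) (qq0 (S theta) Hm U Ha0)
                   (qq_rec (S theta) Hm U Ha0 HR) pr).
  assert (Hc : RiemannInt pr / EE (S theta) 1 = exp (-1 - harmonic (S theta)) * RiemannInt pr).
  2: { rewrite Hc in Hid. exact Hid. }
  unfold EE. replace (trunc_log_series (S theta) 1) with (harmonic (S theta)).
  - replace (-1 - harmonic (S theta)) with (- (1 + harmonic (S theta))) by ring.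
    rewrite exp_Ropp. unfold Rdiv. ring.
  - unfold trunc_log_series, harmonic. apply sum_eq. intros. rewrite pow1. unfold Rdiv. ring.
Qed.
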